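(* Let $K$ be a clique simplicial complex, $X\cup Y=K_0$ a cover of its vertex set, $A:=X\cap Y$, and $P:=\{\sigma\in K\mid\sigma\subset X\text{ or }\sigma\subset Y\text{ or }\sigma\cap A\neq\emptyset\}$. Assume one of the following: (1) $A$ is nonempty and, for every edge $\tau\in K_1\setminus P$ and every subset $\mu\subset A$ with $|\mu|\le2$, the union $\tau\cup\mu$ is a simplex of $K$; (2) $A=\{v\}$ and, for every edge $\tau\in K_1\setminus P$, the set $\tau\cup\{v\}$ is a simplex of $K$. Then the inclusion $K_X\cup K_Y\hookrightarrow K$ is a weak equivalence.
   Context: A simplicial complex is a collection of finite nonempty subsets of a fixed set closed under taking nonempty subsets; $K_0$ is its vertex set, $K_1$ its set of edges, $K_B$ the subcomplex of simplices contained in $B$. $K$ is clique if a set with at least two elements is a simplex iff all its two-element subsets are simplices. Homotopical notions refer to geometric realizations. *)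

(* Defs.v *)
From HB Require Import structures.
From mathcomp Require Import all_boot all_order all_algebra.
From mathcomp Require Import finmap.
From mathcomp Require Import all_classical all_reals all_analysis.
Unset Printing Implicit Defensive.
Import Order.TTheory GRing.Theory Num.Theory.
Import numFieldNormedType.Exports.
Local Open Scope classical_set_scope.
Local Open Scope ring_scope.

Definition is_simplicial_complex {V : choiceType} (K : set {fset V}) : Prop :=
  (forall s, K s -> s != fset0) /\
  (forall s t : {fset V}, K s -> (t `<=` s)%fset -> t != fset0 -> K t).

Definition vertices {V : choiceType} (K : set {fset V}) : set V :=
  [set v | K [fset v]%fset].

Definition edges {V : choiceType} (K : set {fset V}) : set {fset V} :=
  [set s | K s /\ #|` s|%fset = 2%N].

Definition is_clique {V : choiceType} (K : set {fset V}) : Prop :=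
  forall s : {fset V}, (2 <= #|` s|%fset)%N ->
    (K s <-> forall t : {fset V}, (t `<=` s)%fset -> #|` t|%fset = 2%N -> K t).

Definition full_sub {V : choiceType} (K : set {fset V}) (B : set V)
  : set {fset V} := [set s | K s /\ (forall v, v \in s -> B v)].

(* Points of |K| are functions a : V -> R (barycentric coordinates).
   The closed geometric simplex of a finite set s: *)
Definition geom_simplex {R : realType} {V : choiceType} (s : {fset V})
  : set {ptws V -> R} :=
  [set a | (forall v, 0 <= a v) /\ (forall v, v \notin s -> a v = 0) /\
           \sum_(v <- s) a v = 1].

Definition realization {R : realType} {V : choiceType} (K : set {fset V})
  : set {ptws V -> R} :=
  [set a | exists2 s, K s & geom_simplex s a].

(* Open sets of |K| for the standard (coherent / weak) topology: U is open
   iff its trace on each closed simplex |s| (s in K) is open in |s| for the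
   Euclidean topology of |s|; the latter is the subspace topology induced by
   the product topology of V -> R (on |s| only finitely many coordinates
   are nonzero). *)
Definition realization_open {R : realType} {V : choiceType}
  (K : set {fset V}) (U : set {ptws V -> R}) : Prop :=
  U `<=` realization K /\
  forall s, K s -> exists2 W : set {ptws V -> R}, open W &
      W `&` geom_simplex s = U `&` geom_simplex s.

Definition cont_into {R : realType} {V : choiceType} (K : set {fset V})
  {T : topologicalType} (D : set T) (f : T -> {ptws V -> R}) : Prop :=
  (forall x, D x -> realization K (f x)) /\
  forall U, realization_open K U ->
    exists2 W : set T, open W & W `&` D = (f @^-1` U) `&` D.

Definition unit_interval (R : realType) : set R := [set t | 0 <= t <= 1].

Definition cube (R : realType) (n : nat) : set {ptws 'I_n -> R} :=
  [set x | forall i, 0 <= x i <= 1].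

Definition cube_boundary (R : realType) (n : nat) : set {ptws 'I_n -> R} :=
  [set x | cube R n x /\ exists i, x i = 0 \/ x i = 1].

(* representatives of pi_n(|K|, x0): maps (I^n, dI^n) -> (|K|, x0) *)
Definition sphere_map {R : realType} {V : choiceType} (K : set {fset V})
  (n : nat) (x0 : {ptws V -> R}) (f : {ptws 'I_n -> R} -> {ptws V -> R}) : Prop :=
  cont_into K (cube R n) f /\ (forall x, cube_boundary R n x -> f x = x0).

Definition rel_homotopic {R : realType} {V : choiceType} (K : set {fset V})
  (n : nat) (x0 : {ptws V -> R}) (f g : {ptws 'I_n -> R} -> {ptws V -> R}) : Prop :=
  exists H : {ptws 'I_n -> R} * R -> {ptws V -> R},
    cont_into K (cube R n `*` unit_interval R) H /\
    (forall x, cube R n x -> H (x, 0) = f x) /\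
    (forall x, cube R n x -> H (x, 1) = g x) /\
    (forall x t, cube_boundary R n x -> unit_interval R t -> H (x, t) = x0).

Definition path_connected_in {R : realType} {V : choiceType}
  (K : set {fset V}) (a b : {ptws V -> R}) : Prop :=
  exists p : R -> {ptws V -> R}, cont_into K (unit_interval R) p /\
    p 0 = a /\ p 1 = b.

(* The inclusion |L| -> |K| of a subcomplex L of K is a weak (homotopy)
   equivalence: bijection on pi_0, and for every n >= 1 and every base point
   x0 in |L|, the induced map pi_n(|L|,x0) -> pi_n(|K|,x0) is a bijection
   (it is a group homomorphism, hence then an isomorphism). *)
Definition inclusion_weak_equivalence (R : realType) {V : choiceType}
  (L K : set {fset V}) : Prop :=
  (forall b : {ptws V -> R}, realization K b ->
     exists2 a, realization L a & path_connected_in K a b) /\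
  (forall a b : {ptws V -> R}, realization L a -> realization L b ->
     path_connected_in K a b -> path_connected_in L a b) /\
  (forall n (x0 : {ptws V -> R}) f, (0 < n)%N -> realization L x0 -> sphere_map K n x0 f ->
     exists2 g, sphere_map L n x0 g & rel_homotopic K n x0 g f) /\
  (forall n (x0 : {ptws V -> R}) f g, (0 < n)%N -> realization L x0 ->
     sphere_map L n x0 f -> sphere_map L n x0 g ->
     rel_homotopic K n x0 f g -> rel_homotopic L n x0 f g).

(* Main.v *)
From HB Require Import structures.
From mathcomp Require Import all_boot all_order all_algebra.
From mathcomp Require Import finmap.
From mathcomp Require Import all_classical all_reals all_analysis.
Require Import Defs.
From mathcomp Require Import ring lra.
Import Order.TTheory GRing.Theory Num.Theory.
Import numFieldNormedType.Exports.
Local Open Scope classical_set_scope.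
Local Open Scope ring_scope.
Set Implicit Arguments.
Unset Strict Implicit.

Section Geom.
Variables (R : realType) (V : choiceType) (X Y : set V) (v : V).
Hypotheses (Xv : X v) (Yv : Y v).

Definition xs (w : V) : bool := `[< X w /\ ~ Y w >].
Definition ys (w : V) : bool := `[< Y w /\ ~ X w >].
Definition supp (a : V -> R) : {fset V} :=
  xget fset0 [set s : {fset V} | forall w, w \notin s -> a w = 0].
Definition pp (a : V -> R) := \sum_(u <- supp a | xs u) a u.
Definition qq (a : V -> R) := \sum_(u <- supp a | ys u) a u.
Definition mm (a : V -> R) := Num.min (pp a) (qq a).
Definition rr (a : {ptws V -> R}) : {ptws V -> R} := fun w =>
  a w - (xs w)%:R * (a w * mm a / pp a) - (ys w)%:R * (a w * mm a / qq a)
      + (w == v)%:R * (2 * mm a).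
Definition Phi (a : {ptws V -> R}) (t : R) : {ptws V -> R} :=
  fun w => (1 - t) * rr a w + t * a w.

Local Notation gs := (@geom_simplex R V).

Lemma xsv : xs v = false.
Proof. by apply/asboolP => -[]. Qed.
Lemma ysv : ys v = false.
Proof. by apply/asboolP => -[]. Qed.
Lemma xs_ys w : xs w -> ys w = false.
Proof. by move=> /asboolP [Xw nYw]; apply/asboolP => -[]. Qed.

Lemma sum_incl (s1 s2 : {fset V}) (P : pred V) (a : V -> R) :
  (s1 `<=` s2)%fset -> (forall w, w \in s2 -> w \notin s1 -> a w = 0) ->
  \sum_(u <- s1 | P u) a u = \sum_(u <- s2 | P u) a u.
Proof.
move=> sub z; rewrite big_mkcond [RHS]big_mkcond; apply: big_fset_incl => //.
by move=> w /z h /h ->; case: (P w).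
Qed.

Lemma supp_zero (a : V -> R) (s : {fset V}) :
  (forall w, w \notin s -> a w = 0) -> forall w, w \notin supp a -> a w = 0.
Proof.
move=> z; exact: (@xgetPex _ fset0 [set s : {fset V} | forall w, w \notin s -> a w = 0] (ex_intro _ s z)).
Qed.

Lemma sum_suppE (a : V -> R) (s : {fset V}) (P : pred V) :
  (forall w, w \notin s -> a w = 0) ->
  \sum_(u <- supp a | P u) a u = \sum_(u <- s | P u) a u.
Proof.
move=> z; have z' := supp_zero z.
rewrite (@sum_incl (supp a) (s `|` supp a)%fset) ?fsubsetUr //; last first.
  by move=> w _ /z'.
rewrite [RHS](@sum_incl s (s `|` supp a)%fset) ?fsubsetUl //.
by move=> w _ /z.
Qed.

Lemma ppE a (s : {fset V}) : (forall w, w \notin s -> a w = 0) ->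
  pp a = \sum_(u <- s | xs u) a u.
Proof. by move=> z; rewrite /pp /qq (sum_suppE _ z). Qed.
Lemma qqE a (s : {fset V}) : (forall w, w \notin s -> a w = 0) ->
  qq a = \sum_(u <- s | ys u) a u.
Proof. by move=> z; rewrite /pp /qq (sum_suppE _ z). Qed.

Lemma le_sum_term (s : {fset V}) (P : pred V) (a : V -> R) w :
  (forall u, 0 <= a u) -> (forall u, u \notin s -> a u = 0) -> P w ->
  a w <= \sum_(u <- s | P u) a u.
Proof.
move=> a0 z Pw; have [ws|wns] := boolP (w \in s); last by rewrite z // sumr_ge0.
rewrite big_mkcond (bigD1_seq w) ?fset_uniq //= Pw.
by rewrite lerDl sumr_ge0 // => i _; case: (P i).
Qed.

Lemma pp_ge0 a s : gs s a -> 0 <= pp a.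
Proof. by move=> [a0 [z _]]; rewrite (ppE z) sumr_ge0. Qed.
Lemma qq_ge0 a s : gs s a -> 0 <= qq a.
Proof. by move=> [a0 [z _]]; rewrite (qqE z) sumr_ge0. Qed.
Lemma mm_ge0 a s : gs s a -> 0 <= mm a.
Proof. by move=> h; rewrite /mm le_min (pp_ge0 h) (qq_ge0 h). Qed.
Lemma le_pp a s w : gs s a -> xs w -> a w <= pp a.
Proof. by move=> [a0 [z _]] h; rewrite (ppE z); apply: le_sum_term. Qed.
Lemma le_qq a s w : gs s a -> ys w -> a w <= qq a.
Proof. by move=> [a0 [z _]] h; rewrite (qqE z); apply: le_sum_term. Qed.

Lemma frac_le (x m p : R) : 0 <= x -> 0 <= m -> m <= p -> x * m / p <= x.
Proof.
move=> x0 m0 mp; have [->|p0] := eqVneq p 0; first by rewrite invr0 mulr0.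
have pp0 : 0 < p by rewrite lt_neqAle eq_sym p0 (le_trans m0 mp).
by rewrite ler_pdivrMr // ler_wpM2l.
Qed.
Lemma frac_ge0 (x m p : R) : 0 <= x -> 0 <= m -> 0 <= p -> 0 <= x * m / p.
Proof. by move=> *; rewrite mulr_ge0 ?invr_ge0 // mulr_ge0. Qed.

Lemma rr_ge0 a s w : gs s a -> 0 <= rr a w.
Proof.
move=> h; have a0 := h.1; have m0 := mm_ge0 h; rewrite /rr.
have [->|nv] := eqVneq w v; first by rewrite xsv ysv !mul0r !subr0 mul1r addr_ge0 // mulr_ge0.
rewrite mul0r addr0.
case xw: (xs w); first rewrite (xs_ys xw) mul0r subr0 mul1r.
  by rewrite subr_ge0 frac_le // ge_min lexx.
case yw: (ys w); rewrite ?mul0r ?subr0 ?mul1r //.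
by rewrite subr_ge0 frac_le // ge_min lexx orbT.
Qed.

Lemma rr_out a s w : gs s a -> w \notin s -> w != v -> rr a w = 0.
Proof.
move=> [_ [z _]] ws wv; rewrite /rr z // (negbTE wv) !mul0r.
by rewrite !mulr0 !subr0 addr0.
Qed.

Lemma mm_pp0 a s : gs s a -> pp a = 0 -> mm a = 0.
Proof. by move=> h p0; rewrite /mm p0 min_l // (qq_ge0 h). Qed.
Lemma mm_qq0 a s : gs s a -> qq a = 0 -> mm a = 0.
Proof. by move=> h q0; rewrite /mm q0 min_r // (pp_ge0 h). Qed.

Lemma sum_ind (s : {fset V}) (P : pred V) (F : V -> R) :
  \sum_(u <- s) (P u)%:R * F u = \sum_(u <- s | P u) F u.
Proof. by rewrite [RHS]big_mkcond; apply: eq_bigr => u _; case: (P u); rewrite ?mul1r ?mul0r. Qed.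

Lemma rr_sum a s : gs s a -> \sum_(w <- (s `|` [fset v])%fset) rr a w = 1.
Proof.
move=> h; have [a0 [z s1]] := h.
have z' : forall w, w \notin (s `|` [fset v])%fset -> a w = 0.
  by move=> w; rewrite in_fsetU negb_or => /andP[/z].
have inc : forall w, w \in (s `|` [fset v])%fset -> w \notin s -> a w = 0 by move=> w _ /z.
rewrite /rr big_split /= !sumrB.
rewrite !sum_ind -!mulr_suml -(ppE z') -(qqE z').
rewrite -(@sum_incl s) ?fsubsetUl // s1.
rewrite big_mkcond (bigD1_seq v) ?fset_uniq //=; last by rewrite in_fsetU in_fset1 eqxx orbT.
rewrite eqxx big1 ?addr0; last by move=> i /negbTE ->.
have e1 : pp a * mm a / pp a = mm a.
  have [p0|p0] := eqVneq (pp a) 0; first by rewrite (mm_pp0 h p0) p0 !mul0r.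
  by rewrite mulrC mulrA mulVf // mul1r.
have e2 : qq a * mm a / qq a = mm a.
  have [p0|p0] := eqVneq (qq a) 0; first by rewrite (mm_qq0 h p0) p0 !mul0r.
  by rewrite mulrC mulrA mulVf // mul1r.
rewrite -!mulrA in e1 e2 *; rewrite e1 e2; lra.
Qed.

Lemma rr_gs a s : gs s a -> gs (s `|` [fset v])%fset (rr a).
Proof.
move=> h; split; first by move=> w; apply: rr_ge0 h.
split; last exact: rr_sum.
move=> w; rewrite in_fsetU in_fset1 negb_or => /andP[ws wv]; exact: rr_out h ws wv.
Qed.

Lemma rr_id a s : gs s a -> (pp a = 0 \/ qq a = 0) -> rr a = a.
Proof.
move=> h hpq; have m0 : mm a = 0 by case: hpq; [apply: mm_pp0 h| apply: mm_qq0 h].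
apply/funext => w; rewrite /rr m0 !mulr0 !mul0r !mulr0 !subr0 addr0 //.
Qed.

Lemma rr_ys0 a s w : gs s a -> qq a <= pp a -> ys w -> rr a w = 0.
Proof.
move=> h qp yw; have m : mm a = qq a by rewrite /mm min_r.
have xw : xs w = false by case xw: (xs w) => //; rewrite (xs_ys xw) in yw.
have wv : (w == v) = false by apply/eqP => e; rewrite e ysv in yw.
rewrite /rr xw yw wv m !mul0r subr0 addr0 mul1r.
have [q0|q0] := eqVneq (qq a) 0.
  have : a w <= 0 by rewrite -q0 (le_qq h).
  move=> a0'; have a0 := h.1 w.
  have -> : a w = 0 by apply/eqP; rewrite eq_le a0 a0'.
  by rewrite !mul0r subr0.
by rewrite -mulrA mulfV // mulr1 subrr.
Qed.

Lemma rr_xs0 a s w : gs s a -> pp a <= qq a -> xs w -> rr a w = 0.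
Proof.
move=> h qp xw; have m : mm a = pp a by rewrite /mm min_l.
have yw : ys w = false by rewrite xs_ys.
have wv : (w == v) = false by apply/eqP => e; rewrite e xsv in xw.
rewrite /rr xw yw wv m !mul0r subr0 addr0 mul1r.
have [q0|q0] := eqVneq (pp a) 0.
  have : a w <= 0 by rewrite -q0 (le_pp h).
  move=> a0'; have a0 := h.1 w.
  have -> : a w = 0 by apply/eqP; rewrite eq_le a0 a0'.
  by rewrite !mul0r subr0.
by rewrite -mulrA mulfV // mulr1 subrr.
Qed.

Lemma pp0_noxs a s : gs s a -> (forall w, w \in s -> ~~ xs w) -> pp a = 0.
Proof.
move=> [_ [z _]] h; rewrite (ppE z) big_seq_cond big1 // => i /andP[/h /negbTE ->] //.
Qed.
Lemma qq0_noys a s : gs s a -> (forall w, w \in s -> ~~ ys w) -> qq a = 0.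
Proof.
move=> [_ [z _]] h; rewrite (qqE z) big_seq_cond big1 // => i /andP[/h /negbTE ->] //.
Qed.

Lemma gs_face a s (P : pred V) : gs s a -> (forall w, w \in s -> ~~ P w -> a w = 0) ->
  gs [fset w in s | P w]%fset a.
Proof.
move=> [a0 [z s1]] h; split => //; split.
  move=> w; rewrite !inE /= negb_and; case/orP; first exact: z.
  by move=> nP; have [ws|ws] := boolP (w \in s); [exact: h | exact: z].
rewrite -s1; apply: (@sum_incl _ s xpredT).
  by apply/fsubsetP => w; rewrite !inE => /andP[].
by move=> w ws; rewrite !inE ws /= => /h; apply.
Qed.

Lemma gs_mono a s s' : gs s a -> (s `<=` s')%fset -> gs s' a.
Proof.
move=> [a0 [z s1]] ss; split => //; split.
  by move=> w ws; apply: z; apply: contraNN ws; apply/fsubsetP.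
rewrite -s1; symmetry; apply: (@sum_incl s s' xpredT) => // w _; apply: z.
Qed.

Lemma gs_convex (b c : {ptws V -> R}) s t : gs s b -> gs s c -> 0 <= t <= 1 ->
  gs s (fun w => (1 - t) * b w + t * c w).
Proof.
move=> [b0 [bz b1]] [c0 [cz c1]] /andP[t0 t1]; split.
  by move=> w; rewrite addr_ge0 // mulr_ge0 // subr_ge0.
split; first by move=> w ws; rewrite bz // cz // !mulr0 addr0.
by rewrite big_split /= -!mulr_sumr b1 c1; lra.
Qed.

Lemma Phi_gs a s t : gs s a -> 0 <= t <= 1 -> gs (s `|` [fset v])%fset (Phi a t).
Proof.
move=> h ht; apply: gs_convex => //; first exact: rr_gs.
by apply: gs_mono h _; apply: fsubsetUl.
Qed.

Local Notation T := {ptws V -> R}.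

Lemma ptws_cvg (Z : Type) (G : set_system Z) {FG : Filter G}
  (f : Z -> T) (b : T) :
  (forall w, (fun z => f z w) @ G --> b w) -> f @ G --> b.
Proof.
move=> H.
have := @pointwise_cvgP (discrete_topology V) R (f @ G) b.
move=> /(_ _) [] // _ h; apply: h.
move=> t; exact: (H t).
Qed.

Lemma cvg_coord (Z : Type) (G : set_system Z) {FG : Filter G}
  (f : Z -> T) (b : T) w : f @ G --> b -> (fun z => f z w) @ G --> b w.
Proof.
move=> H; have := @continuous_cvg _ _ _ G FG f (@proj V (fun=> R) w) b.
by apply => //; apply: proj_continuous.
Qed.

Lemma cvg_fsum (Z : Type) (G : set_system Z) {FG : Filter G}
  (f : Z -> T) (b : T) (s : seq V) (P : pred V) : f @ G --> b ->
  (fun z => \sum_(u <- s | P u) f z u) @ G --> \sum_(u <- s | P u) b u.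
Proof.
move=> H; elim: s => [|u s IH].
  rewrite big_nil; under eq_fun do rewrite big_nil; exact: cvg_cst.
rewrite big_cons; under eq_fun do rewrite big_cons.
case: (P u); last exact: IH.
by apply: cvgD => //; apply: cvg_coord.
Qed.

Lemma cvg_min2 (Z : Type) (G : set_system Z) {FG : Filter G}
  (f g : Z -> R) (a b : R) : f @ G --> a -> g @ G --> b ->
  (fun z => Num.min (f z) (g z)) @ G --> Num.min a b.
Proof.
move=> fa gb; rewrite minr_absE; under eq_fun do rewrite minr_absE.
apply: cvgMr_tmp; apply: cvgB; first exact: cvgD.
by apply: cvg_norm; apply: cvgB.
Qed.

Lemma cvg_frac (Z : Type) (G : set_system Z) {FG : Filter G}
  (x m p : Z -> R) (x0 m0 p0 : R) :
  x @ G --> x0 -> m @ G --> m0 -> p @ G --> p0 ->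
  (\forall z \near G, 0 <= x z /\ 0 <= m z <= p z) -> 0 <= x0 <= p0 ->
  (fun z => x z * m z / p z) @ G --> x0 * m0 / p0.
Proof.
move=> xc mc pc hn /andP[x00 x0p].
have [p00|p00] := eqVneq p0 0; last first.
  by apply: cvgM; [apply: cvgM|apply: cvgV].
have x0z : x0 = 0 by apply/eqP; rewrite eq_le x00 -p00 x0p.
rewrite p00 invr0 mulr0; apply/cvgrPdist_lt => e e0.
move/cvgrPdist_lt: xc => /(_ e e0); rewrite x0z.
apply: filter_app; apply: filter_app hn; near=> z => -[xz /andP[mz mp]].
rewrite !sub0r !normrN => xe.
rewrite ger0_norm; last by rewrite frac_ge0 // (le_trans mz mp).
by apply: le_lt_trans (frac_le xz mz mp) _; rewrite -(ger0_norm xz).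
Unshelve. all: by end_near.
Qed.

Section AtSimplex.
Context (Z : Type) (G : set_system Z) {FG : Filter G} (al : Z -> T) (a : T)
  (s : {fset V}).
Hypotheses (alc : al @ G --> a) (ev : \forall z \near G, gs s (al z)) (ga : gs s a).

Lemma cvg_pp : (fun z => pp (al z)) @ G --> pp a.
Proof.
rewrite (ppE ga.2.1); apply: (cvg_trans _ (cvg_fsum (s:=s) (P:=xs) alc)).
apply: near_eq_cvg; by apply: filterS ev => z gz; rewrite (ppE gz.2.1).
Qed.
Lemma cvg_qq : (fun z => qq (al z)) @ G --> qq a.
Proof.
rewrite (qqE ga.2.1); apply: (cvg_trans _ (cvg_fsum (s:=s) (P:=ys) alc)).
apply: near_eq_cvg; by apply: filterS ev => z gz; rewrite (qqE gz.2.1).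
Qed.
Lemma cvg_mm : (fun z => mm (al z)) @ G --> mm a.
Proof. exact: cvg_min2 cvg_pp cvg_qq. Qed.

Lemma cvg_rr : (fun z => rr (al z)) @ G --> rr a.
Proof.
apply: ptws_cvg => w; rewrite /rr.
have aw : (fun z => al z w) @ G --> a w := cvg_coord alc.
apply: cvgD; last by do 2 apply: cvgMl_tmp; exact: cvg_mm.
apply: cvgB; first (apply: cvgB; first exact: aw).
  case xw: (xs w); last first.
    rewrite mul0r; under eq_fun do rewrite mul0r; exact: cvg_cst.
  apply: cvgMl_tmp; apply: cvg_frac; [exact: aw|exact: cvg_mm|exact: cvg_pp| |].
    apply: filterS ev => z gz; rewrite gz.1 /= (mm_ge0 gz) /= /mm ge_min lexx //.
  by rewrite ga.1 /= (le_pp ga xw).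
case yw: (ys w); last first.
  rewrite mul0r; under eq_fun do rewrite mul0r; exact: cvg_cst.
apply: cvgMl_tmp; apply: cvg_frac; [exact: aw|exact: cvg_mm|exact: cvg_qq| |].
  apply: filterS ev => z gz; rewrite gz.1 /= (mm_ge0 gz) /= /mm ge_min lexx orbT //.
by rewrite ga.1 /= (le_qq ga yw).
Qed.

Lemma cvg_Phi (be : Z -> R) t : be @ G --> t ->
  (fun z => Phi (al z) (be z)) @ G --> Phi a t.
Proof.
move=> bt; apply: ptws_cvg => w; rewrite /Phi.
apply: cvgD; apply: cvgM => //; last exact: cvg_coord.
  by apply: cvgB => //; exact: cvg_cst.
exact: cvg_coord cvg_rr.
Qed.
End AtSimplex.
End Geom.
Section Glue.
Variables (R : realType) (V : choiceType).
Local Notation T := {ptws V -> R}.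
Local Notation I01 := (unit_interval R).

Lemma relopen_local {S : topologicalType} (D U : set S) :
  (forall x, D x -> U x -> exists2 N, nbhs x N & N `&` D `<=` U) ->
  exists2 W, open W & W `&` D = U `&` D.
Proof.
move=> h.
exists (\bigcup_(N in [set N | open N /\ N `&` D `<=` U]) N).
  by apply: bigcup_open => N [].
apply/seteqP; split => y.
  by move=> [[N [oN sN] Ny] Dy]; split => //; apply: sN.
move=> [Uy Dy]; split => //; have [N Nx sN] := h y Dy Uy.
move: Nx; rewrite nbhsE => -[B [oB By] BN].
exists B => //; split => // z [Bz Dz]; apply: sN; split => //; exact: BN.
Qed.

Definition good (K M : set {fset V}) (Psi : T -> R -> T) :=
  (forall a t, realization K a -> I01 t -> realization M (Psi a t)) /\
  forall U, realization_open M U -> forall a0 t0, realization K a0 -> I01 t0 ->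
    U (Psi a0 t0) ->
    exists O, [/\ realization_open K O, O a0 &
      exists2 e, 0 < e & forall a t, O a -> I01 t -> `|t - t0| < e -> U (Psi a t)].

Lemma transfer (S : topologicalType) (D : set S) (K M : set {fset V}) Psi
  (g : S -> T) (tau : S -> R) :
  good K M Psi -> cont_into K D g -> continuous tau -> (forall x, D x -> I01 (tau x)) ->
  cont_into M D (fun x => Psi (g x) (tau x)).
Proof.
move=> [gm gg] [gK gc] tc tI; split.
  by move=> x Dx; apply: gm; [apply: gK|apply: tI].
move=> U oU; apply: relopen_local => x Dx Ux.
have [Op [oO Ox [e e0 hO]]] := gg U oU (g x) (tau x) (gK x Dx) (tI x Dx) Ux.
have [W oW WD] := gc Op oO.
have Wx : W x.
  have h : (g @^-1` Op `&` D) x by split.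
  by move: h; rewrite -WD => -[].
exists (W `&` (tau @^-1` ball (tau x) e)).
  apply: filterI; first by apply: open_nbhs_nbhs.
  by apply: tc; apply: nbhsx_ballx.
move=> y [[Wy By] Dy].
have h : (W `&` D) y by split.
move: h; rewrite WD => -[Oy _].
apply: hO => //; first exact: tI.
by move: By; rewrite /= -ball_normE /= distrC.
Qed.

Lemma cont_fst (S : topologicalType) (D : set S) (K : set {fset V}) (g : S -> T) :
  cont_into K D g -> cont_into K (D `*` I01) (fun z : S * R => g z.1).
Proof.
move=> [gK gc]; split; first by move=> z [Dz _]; apply: gK.
move=> U oU; have [W oW WD] := gc U oU.
apply: relopen_local => z [Dz _] Uz.
have Wz : W z.1.
  have h : (g @^-1` U `&` D) z.1 by split.
  by move: h; rewrite -WD => -[].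
exists (W `*` setT).
  by exists (W, setT) => //; split => //; [apply: open_nbhs_nbhs | apply: filterT].
move=> y [[Wy _] [Dy _]].
have h : (W `&` D) y.1 by split.
by move: h; rewrite WD => -[].
Qed.

Lemma cont_cst (S : topologicalType) (D : set S) (K : set {fset V}) (b : T) :
  realization K b -> cont_into K D (fun=> b).
Proof.
move=> Kb; split => // U oU.
have [Ub|nUb] := pselect (U b).
  by exists setT; [exact: openT | apply/seteqP; split => x [? ?]].
by exists set0; [exact: open0 | apply/seteqP; split => x [] //].
Qed.

End Glue.
Section Good.
Variables (R : realType) (V : choiceType) (K : set {fset V}) (X Y : set V) (v : V).
Local Notation T := {ptws V -> R}.
Local Notation I01 := (unit_interval R).
Local Notation gs := (@geom_simplex R V).
Local Notation pp := (@pp R V X Y).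
Local Notation qq := (@qq R V X Y).
Local Notation rr := (@rr R V X Y v).
Local Notation Phi := (@Phi R V X Y v).
Local Notation L := (full_sub K X `|` full_sub K Y).

Hypothesis HtK : forall s, K s -> exists2 s', K s' &
  forall a t, gs s a -> I01 t -> gs s' (Phi a t).
Hypothesis HtL : forall s, K s -> exists sX sY, [/\ L sX, L sY &
  forall a, gs s a -> (qq a <= pp a -> gs sX (rr a)) /\ (pp a <= qq a -> gs sY (rr a))].

Lemma goodL : good K L (fun a _ => rr a).
Proof.
split.
  move=> a t [s Ks ga] _; have [sX [sY [LX LY h]]] := HtL Ks.
  have [qp|pq] := lerP (qq a) (pp a).
    by exists sX => //; exact: (h a ga).1 qp.
  by exists sY => //; exact: (h a ga).2 (ltW pq).
move=> U [UL oU] a0 t0 Ka0 _ Ua0.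
exists [set a | realization K a /\ U (rr a)]; split => //; last first.
  by exists 1 => // a t [].
split; first by move=> a [].
move=> s Ks; apply: relopen_local => a ga [_ Ura].
have [sX [sY [LX LY h]]] := HtL Ks.
pose F := within (gs s) (nbhs a).
have alc : (fun z => z) @ F --> a by apply: cvg_within.
have ev : \forall z \near F, gs s z by apply: withinT.
have cp := cvg_pp (X:=X) (Y:=Y) alc ev ga; have cq := cvg_qq (X:=X) (Y:=Y) alc ev ga.
have cr := cvg_rr (X:=X) (Y:=Y) (v:=v) alc ev ga.
have hX : \forall z \near F, qq z <= pp z -> U (rr z).
  have [qp|pq] := lerP (qq a) (pp a).
    have gX := (h a ga).1 qp.
    have [W oW WE] := oU sX LX.
    have Wr : W (rr a).
      have hh : (U `&` gs sX) (rr a) by split.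
      by move: hh; rewrite -WE => -[].
    have : \forall z \near F, W (rr z) by apply: cr; apply: open_nbhs_nbhs.
    move=> HW; apply: filterS (filterI ev HW) => z [gz Wz] qpz.
    have hh : (W `&` gs sX) (rr z) by split => //; exact: (h z gz).1 qpz.
    by move: hh; rewrite WE => -[].
  have : \forall z \near F, 0 < qq z - pp z.
    apply: (@cvgr_gt _ _ _ _ (fun z => qq z - pp z) (qq a - pp a)); first by apply: cvgB; [exact: cq|exact: cp].
    by rewrite subr_gt0.
  apply: filterS => z; rewrite subr_gt0 => pz qpz.
  by move: qpz; rewrite leNgt pz.
have hY : \forall z \near F, pp z <= qq z -> U (rr z).
  have [qp|pq] := lerP (pp a) (qq a).
    have gY := (h a ga).2 qp.
    have [W oW WE] := oU sY LY.
    have Wr : W (rr a).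
      have hh : (U `&` gs sY) (rr a) by split.
      by move: hh; rewrite -WE => -[].
    have : \forall z \near F, W (rr z) by apply: cr; apply: open_nbhs_nbhs.
    move=> HW; apply: filterS (filterI ev HW) => z [gz Wz] qpz.
    have hh : (W `&` gs sY) (rr z) by split => //; exact: (h z gz).2 qpz.
    by move: hh; rewrite WE => -[].
  have : \forall z \near F, 0 < pp z - qq z.
    apply: (@cvgr_gt _ _ _ _ (fun z => pp z - qq z) (pp a - qq a)); first by apply: cvgB; [exact: cp|exact: cq].
    by rewrite subr_gt0.
  apply: filterS => z; rewrite subr_gt0 => pz qpz.
  by move: qpz; rewrite leNgt pz.
have hb := filterI hX hY.
exists (fun z => gs s z -> (qq z <= pp z -> U (rr z)) /\ (pp z <= qq z -> U (rr z))).
  exact: hb.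
move=> z [Nz gz]; split; first by exists s.
have [qp|pq] := lerP (qq z) (pp z); first exact: (Nz gz).1.
exact: (Nz gz).2 (ltW pq).
Qed.


Lemma JL s a t U : K s -> gs s a -> I01 t -> realization_open K U -> U (Phi a t) ->
  \forall t' \near t & a' \near within (gs s) (nbhs a), I01 t' -> U (Phi a' t').
Proof.
move=> Ks ga It [UK oU] Ut.
have [s' Ks' hs'] := HtK Ks.
have [W oW WE] := oU s' Ks'.
have Wt : W (Phi a t).
  have hh : (U `&` gs s') (Phi a t) by split => //; exact: hs'.
  by move: hh; rewrite -WE => -[].
pose G := filter_prod (nbhs t) (within (gs s) (nbhs a)).
have alc : (fun z : R * T => z.2) @ G --> a.
  by apply: cvg_trans (cvg_snd) _; apply: cvg_within.
have ev : \forall z \near G, gs s z.2.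
  by apply: (cvg_snd (F:=nbhs t)); apply: withinT.
have bt : (fun z : R * T => z.1) @ G --> t by apply: cvg_fst.
have cP := cvg_Phi (X:=X) (Y:=Y) (v:=v) alc ev ga bt.
have HW : \forall z \near G, W (Phi z.2 z.1) by apply: cP; apply: open_nbhs_nbhs.
apply: filterS (filterI ev HW) => z [gz Wz] Iz.
have hh : (W `&` gs s') (Phi z.2 z.1) by split => //; exact: hs'.
by move: hh; rewrite WE => -[].
Qed.

Lemma goodK : good K K Phi.
Proof.
split.
  by move=> a t [s Ks ga] It; have [s' Ks' h] := HtK Ks; exists s' => //; exact: h.
move=> U oU a0 t0 [s0 Ks0 ga0] It0 Ut0.
have := JL Ks0 ga0 It0 oU Ut0.
move=> [[A B] [/= nA nB] sub].
have Ba0 : B a0 by apply: (nbhs_singleton nB).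
move/nbhs_ballP: nA => [e e0 hA].
pose ep := e / 2.
have ep0 : 0 < ep by rewrite divr_gt0.
have epe : ep < e by rewrite /ep ltr_pdivrMr // ltr_pMr // ltr1n.
exists [set a | realization K a /\ forall t, I01 t -> `|t - t0| <= ep -> U (Phi a t)].
split.
- split; first by move=> a [].
  move=> s Ks; apply: relopen_local => a ga [_ Ha].
  pose J := [set t | I01 t /\ `|t - t0| <= ep].
  have cJ : compact J.
    have -> : J = `[Num.max 0 (t0 - ep), Num.min 1 (t0 + ep)]%classic.
      apply/seteqP; split => t; rewrite /J /= in_itv /= ge_max le_min.
        move=> [/andP[t0' t1]]; rewrite ler_norml => /andP[h1 h2].
        apply/andP; split; apply/andP; split; lra.
      move=> /andP[/andP[h1 h2] /andP[h3 h4]]; split; first by apply/andP.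
      rewrite ler_norml; apply/andP; split; lra.
    exact: segment_compact.
  have nc := (near_covering_withinP J).2 ((compact_near_coveringP J).1 cJ).
  have := nc T (within (gs s) (nbhs a)) (fun a' t => U (Phi a' t)) _.
  move=> /(_ _) hJ.
  have : \forall a' \near within (gs s) (nbhs a), J `<=` (fun t => U (Phi a' t)).
    apply: hJ => t [It ht].
    have := JL Ks ga It oU (Ha t It ht).
    by apply: filterS => -[t' a'] /= H [It' _]; exact: H It'.
  move=> Nh; exists (fun a' => gs s a' -> forall t, J t -> U (Phi a' t)) => //.
  move=> a' [Na' ga']; split; first by exists s.
  by move=> t It ht; exact: Na' ga' t (conj It ht).
- split; first by exists s0.
  move=> t It ht; apply: (sub (t, a0)) => //; split => //=.
  apply: hA; rewrite /= -ball_normE /= distrC.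
  exact: le_lt_trans ht epe.
- exists ep => // a t [_ Ha] It ht; apply: Ha => //; exact: ltW.
Qed.

End Good.
Section Comb.
Variables (R : realType) (V : choiceType) (K : set {fset V}) (X Y : set V) (v : V).
Hypotheses (HK : is_simplicial_complex K) (Hcov : X `|` Y = vertices K)
  (Xv : X v) (Yv : Y v).
Local Notation T := {ptws V -> R}.
Local Notation I01 := (unit_interval R).
Local Notation gs := (@geom_simplex R V).
Local Notation pp := (@pp R V X Y).
Local Notation qq := (@qq R V X Y).
Local Notation rr := (@rr R V X Y v).
Local Notation Phi := (@Phi R V X Y v).
Local Notation xs := (@xs V X Y).
Local Notation ys := (@ys V X Y).
Local Notation L := (full_sub K X `|` full_sub K Y).

Definition bad (s : {fset V}) :=
  (exists2 w, w \in s & xs w) /\ (exists2 w, w \in s & ys w).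

Lemma face s t : K s -> (t `<=` s)%fset -> t != fset0 -> K t.
Proof. by move=> Ks ts t0; apply: HK.2 Ks ts t0. Qed.

Lemma vert s w : K s -> w \in s -> X w \/ Y w.
Proof.
move=> Ks ws; have : (X `|` Y) w.
  rewrite Hcov /vertices /=; apply: face Ks _ _; last by rewrite -cardfs_gt0 cardfs1.
  by apply/fsubsetP => u; rewrite inE => /eqP ->.
by case; [left|right].
Qed.

Lemma notbad s : K s -> ~ bad s -> (forall w, w \in s -> X w) \/ (forall w, w \in s -> Y w).
Proof.
move=> Ks nb.
have [hx|hx] := pselect (exists2 w, w \in s & xs w); last first.
  right => w ws; case: (vert Ks ws) => // Xw; apply: contra_notP hx => nY.
  by apply: (ex_intro2 _ _ w ws); apply/asboolP.
left => w ws; case: (vert Ks ws) => // Yw; apply: contra_notP nb => nX.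
by split => //; apply: (ex_intro2 _ _ w ws); apply/asboolP.
Qed.

Lemma notbad_pq s a : K s -> ~ bad s -> gs s a -> pp a = 0 \/ qq a = 0.
Proof.
move=> Ks nb ga; case: (notbad Ks nb) => h.
  right; apply: (qq0_noys (X:=X) (Y:=Y) ga) => w /h Xw; apply/asboolP => -[_ nX]; exact: nX Xw.
left; apply: (pp0_noxs (X:=X) (Y:=Y) ga) => w /h Yw; apply/asboolP => -[_ nY]; exact: nY Yw.
Qed.

Hypothesis Hkey : forall s, K s -> bad s -> K (s `|` [fset v])%fset.

Lemma Phi_id a t s : gs s a -> (pp a = 0 \/ qq a = 0) -> Phi a t = a.
Proof.
move=> ga h; apply/funext => w; rewrite /Phi (rr_id v ga h); lra.
Qed.

Lemma HtK s : K s -> exists2 s', K s' & forall a t, gs s a -> I01 t -> gs s' (Phi a t).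
Proof.
move=> Ks; have [b|nb] := pselect (bad s).
  exists (s `|` [fset v])%fset; first exact: Hkey.
  by move=> a t ga It; apply: Phi_gs.
exists s => // a t ga It; rewrite (Phi_id _ ga) //; exact: notbad_pq nb ga.
Qed.

Lemma HtL s : K s -> exists sX sY, [/\ L sX, L sY &
  forall a, gs s a -> (qq a <= pp a -> gs sX (rr a)) /\ (pp a <= qq a -> gs sY (rr a))].
Proof.
move=> Ks; have [b|nb] := pselect (bad s); last first.
  have Ls : L s by case: (notbad Ks nb) => h; [left|right]; split.
  exists s, s; split => // a ga.
  by rewrite (rr_id v ga (notbad_pq Ks nb ga)).
have Ksv := Hkey Ks b.
have vin : v \in (s `|` [fset v])%fset by rewrite in_fsetU in_fset1 eqxx orbT.
exists [fset w in (s `|` [fset v])%fset | `[< X w >]]%fset.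
exists [fset w in (s `|` [fset v])%fset | `[< Y w >]]%fset.
split.
- left; split.
    apply: face Ksv _ _; first by apply/fsubsetP => w; rewrite !inE => /andP[].
    by apply/eqP => /fsetP /(_ v); rewrite !inE eqxx orbT /=; move/asboolP: Xv => ->.
  by move=> w; rewrite !inE => /andP[_ /asboolP].
- right; split.
    apply: face Ksv _ _; first by apply/fsubsetP => w; rewrite !inE => /andP[].
    by apply/eqP => /fsetP /(_ v); rewrite !inE eqxx orbT /=; move/asboolP: Yv => ->.
  by move=> w; rewrite !inE => /andP[_ /asboolP].
move=> a ga; have gr := rr_gs Xv Yv ga; split => h.
  apply: gs_face gr _ => w win /asboolP nX.
  apply: (rr_ys0 Xv ga h); apply/asboolP; split => //.
  move: win; rewrite in_fsetU in_fset1 => /orP[ws|/eqP wv]; last by rewrite wv in nX.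
  by case: (vert Ks ws).
apply: gs_face gr _ => w win /asboolP nY.
apply: (rr_xs0 Yv ga h); apply/asboolP; split => //.
move: win; rewrite in_fsetU in_fset1 => /orP[ws|/eqP wv]; last by rewrite wv in nY.
by case: (vert Ks ws).
Qed.

End Comb.
Section Key.
Variables (V : choiceType) (K : set {fset V}) (X Y : set V) (v : V).
Hypotheses (HK : is_simplicial_complex K) (Hcl : is_clique K)
  (Hcov : X `|` Y = vertices K) (Xv : X v) (Yv : Y v).
Local Notation xs := (@xs V X Y).
Local Notation ys := (@ys V X Y).

Definition Pset := [set s : {fset V} | K s /\
              ((forall v, v \in s -> X v) \/ (forall v, v \in s -> Y v) \/
               (exists2 v, v \in s & (X `&` Y) v))].

Hypothesis Hk : forall tau, edges K tau -> ~ Pset tau ->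
  forall w, (X `&` Y) w -> K (tau `|` [fset w; v])%fset.

Lemma pair_sub (a b : V) (s : {fset V}) : a \in s -> b \in s -> ([fset a; b] `<=` s)%fset.
Proof. by move=> ha hb; apply/fsubsetP => u; rewrite !inE => /orP[]/eqP->. Qed.

Lemma pair_neq0 (a b : V) : ([fset a; b] != fset0)%fset.
Proof. by apply/eqP => /fsetP /(_ a); rewrite !inE eqxx. Qed.

Lemma xs_neq_ys a b : xs a -> ys b -> a != b.
Proof.
move=> /asboolP [Xa nYa] /asboolP [Yb nXb]; apply/eqP => e; apply: nXb; by rewrite -e.
Qed.

Lemma key s : K s -> bad X Y s -> K (s `|` [fset v])%fset.
Proof.
move=> Ks [[x xin xx] [y yin yy]].
have xy := xs_neq_ys xx yy.
have Hedge : forall x' y', xs x' -> ys y' -> K [fset x'; y']%fset ->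
    forall w, (X `&` Y) w -> K ([fset x'; y'] `|` [fset w; v])%fset.
  move=> x' y' hx hy Kxy w Aw; apply: Hk => //.
    by split => //; rewrite cardfs2 (xs_neq_ys hx hy).
  move: hx hy => /asboolP [Xx nYx] /asboolP [Yy nXy].
  move=> [_ [hX | [hY | [u uin [Xu Yu]]]]].
  - by apply: nXy; apply: hX; rewrite !inE eqxx orbT.
  - by apply: nYx; apply: hY; rewrite !inE eqxx.
  - by move: uin; rewrite !inE => /orP[]/eqP e; [apply: nYx|apply: nXy]; rewrite -e.
have Kface : forall a b, a \in s -> b \in s -> K [fset a; b]%fset.
  by move=> a b ha hb; apply: (HK.2 _ _ Ks (pair_sub ha hb) (pair_neq0 a b)).
have c2 : (2 <= #|` (s `|` [fset v])%fset|)%N.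
  have := fsubset_leq_card (@pair_sub x y (s `|` [fset v])%fset _ _).
  by rewrite cardfs2 xy; apply; rewrite in_fsetU ?xin ?yin.
apply: (proj2 (Hcl c2)) => t tsub tcard.
have t0 : t != fset0 by apply/eqP => e; rewrite e cardfs0 in tcard.
have [ts|nts] := boolP (t `<=` s)%fset; first exact: (HK.2 _ _ Ks ts t0).
move/fsubsetPn: nts => [u ut uns].
have uv : u = v.
  by move/fsubsetP: tsub => /(_ u ut); rewrite in_fsetU (negbTE uns) /= in_fset1 => /eqP.
have vt : v \in t by rewrite -uv.
have : #|` (t `\ v)%fset| == 1%N.
  by move: tcard; rewrite (cardfsD1 v) vt add1n => -[->].
move=> /cardfs1P [w tw].
have wt : w \in (t `\ v)%fset by rewrite tw in_fset1.
move: (wt); rewrite in_fsetD1 => /andP[wv wt'].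
have ws : w \in s.
  by move/fsubsetP: tsub => /(_ w wt'); rewrite in_fsetU in_fset1 (negbTE wv) orbF.
have tsub2 : (t `<=` [fset w; v])%fset.
  apply/fsubsetP => z zt; rewrite !inE; have [->|zv] := eqVneq z v; first by rewrite orbT.
  have : z \in (t `\ v)%fset by rewrite in_fsetD1 zv.
  by rewrite tw in_fset1 => ->.
suff [S KS sS] : exists2 S, K S & ([fset w; v] `<=` S)%fset.
  exact: (HK.2 _ _ KS (fsubset_trans tsub2 sS) t0).
have wvS : forall a b c, ([fset w; v] `<=` [fset a; b] `|` [fset c; v])%fset ->
  ([fset w; v] `<=` [fset a; b] `|` [fset c; v])%fset by [].
have [XYw|nXYw] := pselect (X w /\ Y w).
  exists ([fset x; y] `|` [fset w; v])%fset; first exact: Hedge xx yy (Kface _ _ xin yin) w XYw.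
  by apply/fsubsetP => z; rewrite !inE => /orP[]/eqP->; rewrite !eqxx ?orbT.
have Av : (X `&` Y) v by split.
have [Xw|nXw] := pselect (X w).
  have xw : xs w by apply/asboolP; split => // Yw; apply: nXYw.
  exists ([fset w; y] `|` [fset v; v])%fset; first exact: Hedge xw yy (Kface _ _ ws yin) v Av.
  by apply/fsubsetP => z; rewrite !inE => /orP[]/eqP->; rewrite !eqxx ?orbT.
have Yw : Y w.
  have : (X `|` Y) w.
    rewrite Hcov /vertices /=; apply: (HK.2 _ _ Ks) => //; last by rewrite -cardfs_gt0 cardfs1.
    by apply/fsubsetP => z; rewrite inE => /eqP ->.
  by case.
have yw : ys w by apply/asboolP.
exists ([fset x; w] `|` [fset v; v])%fset; first exact: Hedge xx yw (Kface _ _ xin ws) v Av.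
by apply/fsubsetP => z; rewrite !inE => /orP[]/eqP->; rewrite !eqxx ?orbT.
Qed.

End Key.
Lemma Phi0 (R : realType) (V : choiceType) (X Y : set V) (v : V) (a : {ptws V -> R}) :
  Phi X Y v a 0 = rr (R:=R) X Y v a.
Proof. by apply/funext => w; rewrite /Phi; lra. Qed.
Lemma Phi1 (R : realType) (V : choiceType) (X Y : set V) (v : V) (a : {ptws V -> R}) :
  Phi X Y v a 1 = a.
Proof. by apply/funext => w; rewrite /Phi; lra. Qed.

Theorem corollary9p4 (R : realType) (V : choiceType) (K : set {fset V})
  (X Y : set V) :
  is_simplicial_complex K -> is_clique K ->
  X `|` Y = vertices K ->
  let A := X `&` Y in
  let P := [set s : {fset V} | K s /\
              ((forall v, v \in s -> X v) \/ (forall v, v \in s -> Y v) \/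
               (exists2 v, v \in s & A v))] in
  ((A !=set0) /\
     (forall tau mu : {fset V}, edges K tau -> ~ P tau ->
        (forall v, v \in mu -> A v) -> (#|` mu|%fset <= 2)%N ->
        K (tau `|` mu)%fset)
   \/
   (exists v : V, A = [set v] /\
     (forall tau : {fset V}, edges K tau -> ~ P tau -> K (tau `|` [fset v]%fset)%fset))) ->
  inclusion_weak_equivalence R (full_sub K X `|` full_sub K Y) K.
Proof.
move=> HK Hcl Hcov A P Hcase.
have [v [Xv Yv Hk]] : exists v, [/\ X v, Y v & forall tau, edges K tau -> ~ Pset K X Y tau ->
    forall w, (X `&` Y) w -> K (tau `|` [fset w; v])%fset].
  case: Hcase => [[[v0 Av0] H1] | [v0 [Av H2]]].
  - exists v0; split; [exact: Av0.1 | exact: Av0.2 |].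
    move=> tau et nP w Aw; apply: H1 => //.
      by move=> u; rewrite !inE => /orP[]/eqP->.
    by rewrite cardfs2; case: (_ != _).
  - have Av0 : A v0 by rewrite Av.
    exists v0; split; [exact: Av0.1 | exact: Av0.2 |].
    move=> tau et nP w Aw.
    have : A w := Aw.
    rewrite Av => ->.
    have -> : [fset v0; v0]%fset = [fset v0]%fset by apply/fsetP => u; rewrite !inE orbb.
    exact: H2.
have Hkey := key HK Hcl Hcov Xv Yv Hk.
have gL := goodL (HtL R HK Hcov Xv Yv Hkey).
have gK := goodK (HtK R HK Hcov Xv Yv Hkey).
set L := full_sub K X `|` full_sub K Y.
have rrL : forall a, realization L a -> rr (R:=R) X Y v a = a.
  move=> a [s [[Ks sX]|[Ks sY]] ga].
    apply: (rr_id v ga); right; apply: (qq0_noys (X:=X) (Y:=Y) ga) => w /sX Xw.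
    by apply/asboolP => -[_ nX]; exact: nX Xw.
  apply: (rr_id v ga); left; apply: (pp0_noxs (X:=X) (Y:=Y) ga) => w /sY Yw.
  by apply/asboolP => -[_ nY]; exact: nY Yw.
have PhiL : forall (a : {ptws V -> R}) t, realization L a -> Phi X Y v a t = a.
  by move=> a t La; apply/funext => w; rewrite /Phi rrL //; lra.
have I0 : unit_interval R 0 by rewrite /unit_interval /= lexx ler01.
have c0 : forall S : topologicalType, continuous (fun _ : S => (0:R)).
  by move=> S x; apply: cvg_cst.
have cid : continuous (fun t : R => t) by move=> x; apply: cvg_id.
split; [|split; [|split]].
- move=> b Kb; exists (rr X Y v b); first exact: gL.1 b 0 Kb I0.
  exists (fun t => Phi X Y v b t); split.
    exact: (transfer gK (cont_cst (unit_interval R) Kb) cid (fun x h => h)).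
  by rewrite Phi0 Phi1.
- move=> a b La Lb [p [pc [p0 p1]]]; exists (fun t => rr X Y v (p t)); split.
    exact: (transfer gL pc (c0 _) (fun _ _ => I0)).
  by rewrite p0 p1 !rrL.
- move=> n x0 f n0 Lx0 [fc fb]; exists (fun x => rr X Y v (f x)).
    split; first exact: (transfer gL fc (c0 _) (fun _ _ => I0)).
    by move=> x bx; rewrite fb // rrL.
  exists (fun z => Phi X Y v (f z.1) z.2); split.
    have csnd : continuous (fun z : {ptws 'I_n -> R} * R => z.2).
      by move=> z; apply: cvg_snd.
    exact: (transfer gK (cont_fst fc) csnd (fun z h => h.2)).
  split; first by move=> x cx; rewrite Phi0.
  split; first by move=> x cx; rewrite Phi1.
  by move=> x t bx It; rewrite fb // PhiL.
- move=> n x0 f g n0 Lx0 [fc fb] [gc gb] [H [Hc [H0 [H1 Hb]]]].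
  exists (fun z => rr X Y v (H z)); split.
    exact: (transfer gL Hc (c0 _) (fun _ _ => I0)).
  split; first by move=> x cx; rewrite H0 // rrL //; exact: fc.1 x cx.
  split; first by move=> x cx; rewrite H1 // rrL //; exact: gc.1 x cx.
  by move=> x t bx It; rewrite Hb // rrL.
Qed.
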